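(* Let $\vec r_1,\vec r_2$ be in the closed unit ball of $\mathbb{R}^3$ and linearly dependent, with $r_i=|\vec r_i|$ and $m=\max\{r_1,r_2\}$. Then $$d^2_{\mathrm{symm},2}(\rho(\vec r_1),\rho(\vec r_2))=2\Big(|\vec r_1-\vec r_2|+\sqrt{1-r_1^2}+\sqrt{1-r_2^2}-2\sqrt{\big(1+\tfrac{\vec r_1\cdot\vec r_2}{m}\big)(1-m)}\Big),$$ with the convention that $\tfrac{\vec r_1\cdot\vec r_2}{m}=0$ when $m=0$.
   Context: Qubit setting: $\mathcal{H}=\mathbb{C}^2$, $\mathcal{H}^*$ is identified with $\mathbb{C}^2$ via the dual basis, and $A^T$ is the usual matrix transpose; operators on $\mathcal{H}\otimes\mathcal{H}^*$ are $4\times4$ matrices in the basis $e_1\otimes e_1^*,e_1\otimes e_2^*,e_2\otimes e_1^*,e_2\otimes e_2^*$. Pauli matrices: $\sigma_1=\sigma_x=\begin{pmatrix}0&1\\1&0\end{pmatrix}$, $\sigma_2=\sigma_y=\begin{pmatrix}0&-i\\i&0\end{pmatrix}$, $\sigma_3=\sigma_z=\begin{pmatrix}1&0\\0&-1\end{pmatrix}$, $\vec\sigma=(\sigma_1,\sigma_2,\sigma_3)$, and $\rho(\vec r)=\tfrac12(I+\vec r\cdot\vec\sigma)$ for $|\vec r|\le1$. The set of couplings of states $\rho,\omega$ is $\mathcal{C}(\rho,\omega)=\{\Pi\in\mathcal{S}(\mathcal{H}\otimes\mathcal{H}^* ):\mathrm{tr}_{\mathcal{H}^*}[\Pi]=\omega,\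 \mathrm{tr}_{\mathcal{H}}[\Pi]=\rho^T\}$. $C_{\mathrm{symm},2}=\sum_{k=1}^3(\sigma_k\otimes I^T-I\otimes\sigma_k^T)^2$, which equals the matrix $\begin{pmatrix}4&0&0&-4\\0&8&0&0\\0&0&8&0\\-4&0&0&4\end{pmatrix}$; $D^2_{\mathrm{symm},2}(\rho,\omega)=\min_{\Pi\in\mathcal{C}(\rho,\omega)}\mathrm{tr}[\Pi C_{\mathrm{symm},2}]$, and the quadratic Wasserstein divergence is $d_{\mathrm{symm},2}(\rho,\omega)=\big(D^2_{\mathrm{symm},2}(\rho,\omega)-\tfrac12(D^2_{\mathrm{symm},2}(\rho,\rho)+D^2_{\mathrm{symm},2}(\omega,\omega))\big)^{1/2}$. *)

(* Defs.v *)
From mathcomp Require Import all_boot all_order all_algebra.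
From mathcomp Require Import classical_sets reals.
From mathcomp.real_closed Require Import complex.
Set Implicit Arguments. Unset Strict Implicit. Unset Printing Implicit Defensive.
Import Order.TTheory GRing.Theory Num.Theory.
Local Open Scope ring_scope.
Local Open Scope complex_scope.

Section Qubit.
Variable R : realType.
Local Notation C := (R[i]).

Definition pauli (k : 'I_3) : 'M[C]_2 :=
  if val k == 0%N then \matrix_(i < 2, j < 2) (if i == j then 0 else 1)
  else if val k == 1%N then
    \matrix_(i < 2, j < 2)
      (if i == j then 0 else if val i == 0%N then - 'i else 'i)
  else \matrix_(i < 2, j < 2)
      (if i == j then (if val i == 0%N then 1 else -1) else 0).

Definition bloch (r : 'rV[R]_3) : 'M[C]_2 :=
  2^-1 *: (1%:M + \sum_(k < 3) (r 0 k)%:C *: pauli k).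

Definition adj {m n} (A : 'M[C]_(m, n)) : 'M[C]_(n, m) := (map_mx conjc A)^T.

(* Positive semidefinite: <v, A v> >= 0 for all v (order of the
   numClosedField C: real and nonnegative). *)
Definition psd {n} (A : 'M[C]_n) : Prop :=
  forall v : 'cV[C]_n, 0 <= (adj v *m A *m v) 0 0.

Definition state {n} (A : 'M[C]_n) : Prop := psd A /\ \tr A = 1.

(* Basis of H (x) H^*: index p : 'I_4 encodes e_(p/2) (x) e_(p mod 2)^*, i.e.
   the order e1e1*, e1e2*, e2e1*, e2e2*. *)
Definition hidx (p : 'I_4) : 'I_2 := inord (p %/ 2).
Definition didx (p : 'I_4) : 'I_2 := inord (p %% 2).

Definition kron (A B : 'M[C]_2) : 'M[C]_4 :=
  \matrix_(p < 4, q < 4) (A (hidx p) (hidx q) * B (didx p) (didx q)).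

Definition ptrD (P : 'M[C]_4) : 'M[C]_2 :=
  \matrix_(i < 2, k < 2)
    \sum_(p < 4) \sum_(q < 4)
      (if (hidx p == i) && (hidx q == k) && (didx p == didx q) then P p q else 0).
Definition ptrH (P : 'M[C]_4) : 'M[C]_2 :=
  \matrix_(j < 2, l < 2)
    \sum_(p < 4) \sum_(q < 4)
      (if (didx p == j) && (didx q == l) && (hidx p == hidx q) then P p q else 0).

Definition coupling (rho omega : 'M[C]_2) (P : 'M[C]_4) : Prop :=
  state P /\ ptrD P = omega /\ ptrH P = rho^T.

Definition Csymm2 : 'M[C]_4 :=
  \sum_(k < 3) (kron (pauli k) (1%:M)^T - kron 1%:M (pauli k)^T) ^+ 2.

(* D^2_symm,2(rho, omega) = min over couplings of tr[P C]  (as infimum) *)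
Definition D2symm (rho omega : 'M[C]_2) : R :=
  inf [set x : R | exists P, coupling rho omega P /\ \tr (P *m Csymm2) = x%:C].

Definition dsymm (rho omega : 'M[C]_2) : R :=
  Num.sqrt (D2symm rho omega - (D2symm rho rho + D2symm omega omega) / 2).

Definition dot3 (u v : 'rV[R]_3) : R := \sum_(k < 3) u 0 k * v 0 k.
Definition norm3 (u : 'rV[R]_3) : R := Num.sqrt (dot3 u u).
End Qubit.

(* Main.v *)
Require Import Defs.
From mathcomp Require Import all_boot all_order all_algebra.
From mathcomp Require Import classical_sets reals.
From mathcomp.real_closed Require Import complex.
From mathcomp Require Import ring lra.
Import Order.TTheory GRing.Theory Num.Theory.
Local Open Scope ring_scope.
Local Open Scope complex_scope.
Set Implicit Arguments. Unset Strict Implicit. Unset Printing Implicit Defensive.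
Section L1.
Variable R : realType.
Local Notation C := (R[i]).
Lemma sum4 (F : 'I_4 -> C) : \sum_(i < 4) F i = F (inord 0) + F (inord 1) + F (inord 2) + F (inord 3).
Proof.
rewrite !big_ord_recr big_ord0 /= GRing.add0r.
by congr (_ + _ + _ + _); congr F; apply: val_inj; rewrite /= inordK.
Qed.
Lemma sum3 (F : 'I_3 -> C) : \sum_(i < 3) F i = F (inord 0) + F (inord 1) + F (inord 2).
Proof.
rewrite !big_ord_recr big_ord0 /= GRing.add0r.
by congr (_ + _ + _); congr F; apply: val_inj; rewrite /= inordK.
Qed.
Lemma inordE2 (a b : nat) : (a < 2)%N -> (b < 2)%N -> (inord a == inord b :> 'I_2) = (a == b).
Proof. by move=> ha hb; rewrite -val_eqE /= !inordK. Qed.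
Lemma vinord2 a : (a < 2)%N -> val (inord a : 'I_2) = a.
Proof. by move=> h; rewrite /= inordK. Qed.
Lemma ii : 'i * 'i = -1 :> C.
Proof. by rewrite -expr2 sqr_i. Qed.

Definition pn (k a b : nat) : C :=
  match k, a, b with
  | 0, 0, 1 => 1 | 0, 1, 0 => 1
  | 1, 0, 1 => - 'i | 1, 1, 0 => 'i
  | 2, 0, 0 => 1 | 2, 1, 1 => -1
  | _, _, _ => 0 end.

Lemma pauliE k a b : (k < 3)%N -> (a < 2)%N -> (b < 2)%N ->
  pauli R (inord k) (inord a) (inord b) = pn k a b.
Proof.
move=> hk ha hb; have hv : val (inord k : 'I_3) = k by rewrite /= inordK.
rewrite /pauli hv.
case: k hk {hv} => [|[|[|]]] // _; rewrite !mxE inordE2 // ?inordK //;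
  case: a ha => [|[|]] // _; case: b hb => [|[|]] // _; rewrite vinord2.
all: try done.
Qed.
Lemma id2E a b : (a < 2)%N -> (b < 2)%N -> (1%:M : 'M[C]_2) (inord a) (inord b) = (a == b)%:R.
Proof. by move=> ha hb; rewrite !mxE inordE2. Qed.

End L1.

Section LC.
Variable R : realType.
Local Notation C := (R[i]).
Definition Cm : 'M[C]_4 := \matrix_(p < 4, q < 4)
  nth (0:C) (nth [::] [:: [:: 4; 0; 0; -4]; [:: 0; 8; 0; 0]; [:: 0;0;8;0]; [:: -4;0;0;4]] p) q.
Lemma Csymm2E : Csymm2 R = Cm.
Proof.
apply/matrixP => p q.
rewrite /Csymm2 summxE sum3 !expr2 !mxE !sum4 !mxE /hidx /didx !inordK //=.
rewrite /Cm ?mxE.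
case: p => [[|[|[|[|p]]]] hp] //; case: q => [[|[|[|[|q]]]] hq] //=.
all: rewrite ?trmx1 ?mxE !pauliE // ?inordE2 //=.
all: rewrite ?(mulr0,mul0r,mulr1,mul1r,subr0,sub0r,GRing.add0r,addr0,mulrN,mulNr,opprK,ii).
all: ring.
Qed.


End LC.

Section L1b.
Variable R : realType.
Local Notation C := (R[i]).
Lemma cjM (x y : C) : (conjc (x * y)) = (conjc x) * (conjc y).
Proof. exact: rmorphM. Qed.
Lemma cjN (x : C) : (conjc (- x)) = - (conjc x).
Proof. exact: rmorphN. Qed.
Lemma cjD (x y : C) : (conjc (x + y)) = (conjc x) + (conjc y).
Proof. exact: rmorphD. Qed.
Lemma cjB (x y : C) : (conjc (x - y)) = (conjc x) - (conjc y).
Proof. exact: rmorphB. Qed.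
Lemma cjK (x : C) : (conjc ((conjc x))) = x.
Proof. exact: conjcK. Qed.
Lemma cjR (x : R) : (conjc (x%:C)) = x%:C.
Proof. exact: conjc_real. Qed.

Definition Qf (P : 'M[C]_4) (v : 'cV[C]_4) : C := (adj v *m P *m v) 0 0.

Lemma QE P v : Qf P v = \sum_(p < 4) \sum_(q < 4) (conjc (v p 0)) * P p q * v q 0.
Proof.
rewrite /Qf mxE; under eq_bigr => q _ do rewrite mxE mulr_suml.
rewrite exchange_big /=; apply: eq_bigr => p _; apply: eq_bigr => q _.
by rewrite /adj !mxE.
Qed.

Definition vec4 (a b c d : C) : 'cV[C]_4 := \col_(p < 4) nth 0 [:: a; b; c; d] p.

Lemma vec4E a b c d k : (k < 4)%N -> vec4 a b c d (inord k) 0 = nth 0 [:: a; b; c; d] k.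
Proof. by move=> h; rewrite mxE inordK. Qed.

Definition pe (P : 'M[C]_4) (i j : nat) := P (inord i) (inord j).

Lemma ptrDE P a k : (a < 2)%N -> (k < 2)%N ->
  ptrD P (inord a) (inord k) = pe P (2*a)%N (2*k)%N + pe P (2*a+1)%N (2*k+1)%N.
Proof.
move=> hi hk; rewrite /pe mxE !sum4 /hidx /didx !inordK //= !inordE2 //.
case: a hi => [|[|]] // _; case: k hk => [|[|]] // _ /=.
all: rewrite ?(GRing.add0r, addr0); by [].
Qed.

Lemma ptrHE P j l : (j < 2)%N -> (l < 2)%N ->
  ptrH P (inord j) (inord l) = pe P j l + pe P (2+j)%N (2+l)%N.
Proof.
move=> hi hk; rewrite /pe mxE !sum4 /hidx /didx !inordK //= !inordE2 //.
case: j hi => [|[|]] // _; case: l hk => [|[|]] // _ /=.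
all: rewrite ?(GRing.add0r, addr0); by [].
Qed.

Lemma trE (M : 'M[C]_4) : \tr M = pe M 0 0 + pe M 1 1 + pe M 2 2 + pe M 3 3.
Proof. by rewrite /mxtrace sum4. Qed.

Lemma ReD (x y : C) : complex.Re (x + y) = complex.Re x + complex.Re y.
Proof. by case: x => a b; case: y => c d; simpc. Qed.
Lemma ImD (x y : C) : complex.Im (x + y) = complex.Im x + complex.Im y.
Proof. by case: x => a b; case: y => c d; simpc. Qed.
Lemma ReN (x : C) : complex.Re (- x) = - complex.Re x.
Proof. by case: x => a b; simpc. Qed.
Lemma ReB (x y : C) : complex.Re (x - y) = complex.Re x - complex.Re y.
Proof. by rewrite ReD ReN. Qed.
Lemma ReR (a : R) : complex.Re (a%:C) = a.
Proof. by []. Qed.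
Lemma ReRM (a : R) (z : C) : complex.Re (a%:C * z) = a * complex.Re z.
Proof. case: z => b c; simpc; rewrite /=; ring. Qed.
Lemma ge0_real (z : C) : 0 <= z -> z = (complex.Re z)%:C /\ 0 <= complex.Re z.
Proof.
rewrite lecE => /andP [/eqP hi hr]; split => //.
by case: z hi hr => a b /= -> _.
Qed.
End L1b.

Section L2.
Variable R : realType.
Local Notation C := (R[i]).

Lemma invC2 : (2^-1 : C) = (2^-1 : R)%:C.
Proof. by rewrite fmorphV rmorph_nat. Qed.
Lemma oneC : (1 : C) = 1 +i* 0. Proof. by []. Qed.
Lemma zeroC : (0 : C) = 0 +i* 0. Proof. by []. Qed.


End L2.
Ltac csimp := rewrite ?invC2 -?complexr0 ?oneC ?zeroC; simpc.
Section L2b.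
Variable R : realType.
Local Notation C := (R[i]).
Section B.
Variable r : 'rV[R]_3.
Let x1 := r 0 (inord 0).
Let x2 := r 0 (inord 1).
Let x3 := r 0 (inord 2).
Lemma bloch00 : bloch r (inord 0) (inord 0) = ((1 + x3)/2) +i* 0.
Proof. rewrite !mxE summxE sum3 !mxE !pauliE // inordE2 //=; csimp; congr (_ +i* _); rewrite /x3; ring. Qed.
Lemma bloch11 : bloch r (inord 1) (inord 1) = ((1 - x3)/2) +i* 0.
Proof. rewrite !mxE summxE sum3 !mxE !pauliE // inordE2 //=; csimp; congr (_ +i* _); rewrite /x3; ring. Qed.
Lemma bloch01 : bloch r (inord 0) (inord 1) = (x1/2) +i* (- (x2/2)).
Proof. rewrite !mxE summxE sum3 !mxE !pauliE // inordE2 //=; csimp; congr (_ +i* _); rewrite /x1 /x2; ring. Qed.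
Lemma bloch10 : bloch r (inord 1) (inord 0) = (x1/2) +i* (x2/2).
Proof. rewrite !mxE summxE sum3 !mxE !pauliE // inordE2 //=; csimp; congr (_ +i* _); rewrite /x1 /x2; ring. Qed.
End B.
End L2b.

Section L3.
Variable R : realType.
Local Notation C := (R[i]).
Variables (P : 'M[C]_4) (u0 u1 : C).
Let c0 := (conjc u0).
Let c1 := (conjc u1).
Definition vA := vec4 (u0*(conjc u0)) (u0*(conjc u1)) (u1*(conjc u0)) (u1*(conjc u1)).
Definition vB := vec4 ((conjc u1) * u1) (- ((conjc u1) * u0)) (- ((conjc u0) * u1)) ((conjc u0) * u0).
Definition vG1 := vec4 (- (u0*u1)) (u0*u0) (- (u1*u1)) (u1*u0).
Definition vG2 := vec4 (- ((conjc u1) * (conjc u0))) (- ((conjc u1) * (conjc u1))) ((conjc u0) * (conjc u0)) ((conjc u0) * (conjc u1)).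
Let Nc := u0 * (conjc u0) + u1 * (conjc u1).
Let p i j := pe P i j.

Ltac qexp := rewrite !QE !sum4 /vA /vB /vG1 /vG2 !vec4E //= ?(cjM, cjN, cjK, cjD, cjB).

Lemma GA : Qf P vA + Qf P vG1 = Nc * ((conjc u0) * (p 0 0 + p 1 1) * u0 + (conjc u0) * (p 0 2 + p 1 3) * u1
   + (conjc u1) * (p 2 0 + p 3 1) * u0 + (conjc u1) * (p 2 2 + p 3 3) * u1).
Proof. qexp. rewrite /p /Nc /pe. ring. Qed.

Lemma GB : Qf P vA + Qf P vG2 = Nc * (u0 * (p 0 0 + p 2 2) * (conjc u0) + u0 * (p 0 1 + p 2 3) * (conjc u1)
   + u1 * (p 1 0 + p 3 2) * (conjc u0) + u1 * (p 1 1 + p 3 3) * (conjc u1)).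
Proof. qexp. rewrite /p /Nc /pe. ring. Qed.
Lemma GC : Qf P vB + Qf P vG2 = Nc * (u1 * (p 0 0 + p 1 1) * (conjc u1) - u1 * (p 0 2 + p 1 3) * (conjc u0)
   - u0 * (p 2 0 + p 3 1) * (conjc u1) + u0 * (p 2 2 + p 3 3) * (conjc u0)).
Proof. qexp. rewrite /p /Nc /pe. ring. Qed.
Lemma GD : Qf P vB + Qf P vG1 = Nc * ((conjc u1) * (p 0 0 + p 2 2) * u1 - (conjc u1) * (p 0 1 + p 2 3) * u0
   - (conjc u0) * (p 1 0 + p 3 2) * u1 + (conjc u0) * (p 1 1 + p 3 3) * u0).
Proof. qexp. rewrite /p /Nc /pe. ring. Qed.
Lemma GF : Qf P (vA + vB) = conjc Nc * Nc * (p 0 0 + p 0 3 + p 3 0 + p 3 3).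
Proof. rewrite !QE !sum4 /vA /vB !mxE !inordK //= ?(cjM, cjN, cjK, cjD, cjB). rewrite /p /Nc /pe ?(cjM, cjN, cjK, cjD, cjB). ring. Qed.
End L3.

Section L3b.
Variable R : realType.
Local Notation C := (R[i]).

Lemma GE (P : 'M[C]_4) (v w : 'cV[C]_4) (a b : R) :
  Qf P (a%:C *: v - b%:C *: w) = a%:C * a%:C * Qf P v + b%:C * b%:C * Qf P w
     - a%:C * b%:C * (Qf P (v + w) - Qf P v - Qf P w).
Proof. rewrite !QE !sum4 !mxE ?cjB ?cjM ?cjD ?cjR. ring. Qed.

Lemma QD (P1 P2 : 'M[C]_4) x : Qf (P1 + P2) x = Qf P1 x + Qf P2 x.
Proof. by rewrite /Qf mulmxDr mulmxDl mxE. Qed.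
Lemma QZ (P : 'M[C]_4) (k : C) x : Qf (k *: P) x = k * Qf P x.
Proof. by rewrite /Qf -scalemxAr -scalemxAl mxE. Qed.

Lemma adjM m n p (A : 'M[C]_(m, n)) (B : 'M[C]_(n, p)) : adj (A *m B) = adj B *m adj A.
Proof. by rewrite /adj map_mxM trmx_mul. Qed.
Lemma adjK m n (A : 'M[C]_(m, n)) : adj (adj A) = A.
Proof. by apply/matrixP => i j; rewrite /adj !mxE cjK. Qed.

Lemma Qouter (v x : 'cV[C]_4) : 0 <= Qf (v *m adj v) x.
Proof.
rewrite /Qf mulmxA -mulmxA.
have -> : adj x *m v = adj (adj v *m x) by rewrite adjM adjK.
rewrite mxE big_ord1 /adj !mxE mulrC.
exact: mulcJ_ge0.
Qed.

Lemma psd_comb (v1 v2 v3 : 'cV[C]_4) (k1 k2 : R) : 0 <= k1 -> 0 <= k2 ->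
  psd (v1 *m adj v1 + k1%:C *: (v2 *m adj v2) + k2%:C *: (v3 *m adj v3)).
Proof.
move=> h1 h2 x; rewrite -[(_ *m _ *m x) 0 0]/(Qf _ x) !QD !QZ.
apply: addr_ge0; [apply: addr_ge0|]; rewrite ?Qouter //; apply: mulr_ge0; rewrite ?Qouter // ler0c //.
Qed.
End L3b.

Section L4.
Variable R : realType.
Local Notation C := (R[i]).
Variables (u0 u1 : C) (a b k1 k2 : R).
Let c0 := conjc u0.
Let c1 := conjc u1.
Let Nc := u0 * conjc u0 + u1 * conjc u1.
Definition gv := a%:C *: vA u0 u1 + b%:C *: vB u0 u1.
Definition Pw := gv *m adj gv + k1%:C *: (vG1 u0 u1 *m adj (vG1 u0 u1)) + k2%:C *: (vG2 u0 u1 *m adj (vG2 u0 u1)).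

Lemma PwE p q : (p < 4)%N -> (q < 4)%N -> pe Pw p q =
  gv (inord p) 0 * conjc (gv (inord q) 0) + k1%:C * (vG1 u0 u1 (inord p) 0 * conjc (vG1 u0 u1 (inord q) 0))
  + k2%:C * (vG2 u0 u1 (inord p) 0 * conjc (vG2 u0 u1 (inord q) 0)).
Proof. by move=> hp hq; rewrite /pe /Pw !mxE !big_ord1 /adj !mxE. Qed.

Ltac wexp := rewrite ?ptrDE ?ptrHE // ?PwE // /gv /vA /vB /vG1 /vG2 !mxE !inordK //= ?(cjM, cjN, cjK, cjD, cjB, cjR).

Lemma WD00 : ptrD Pw (inord 0) (inord 0) = Nc * ((a*a+k1)%:C * u0 * c0 + (b*b+k2)%:C * c1 * u1).
Proof. wexp. rewrite /Nc /c0 /c1 ?rmorphD ?rmorphM. ring. Qed.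
Lemma WD01 : ptrD Pw (inord 0) (inord 1) = Nc * ((a*a+k1)%:C * u0 * c1 - (b*b+k2)%:C * c1 * u0).
Proof. wexp. rewrite /Nc /c0 /c1 ?rmorphD ?rmorphM. ring. Qed.
Lemma WD10 : ptrD Pw (inord 1) (inord 0) = Nc * ((a*a+k1)%:C * u1 * c0 - (b*b+k2)%:C * c0 * u1).
Proof. wexp. rewrite /Nc /c0 /c1 ?rmorphD ?rmorphM. ring. Qed.
Lemma WD11 : ptrD Pw (inord 1) (inord 1) = Nc * ((a*a+k1)%:C * u1 * c1 + (b*b+k2)%:C * c0 * u0).
Proof. wexp. rewrite /Nc /c0 /c1 ?rmorphD ?rmorphM. ring. Qed.
Lemma WH00 : ptrH Pw (inord 0) (inord 0) = Nc * ((a*a+k2)%:C * c0 * u0 + (b*b+k1)%:C * u1 * c1).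
Proof. wexp. rewrite /Nc /c0 /c1 ?rmorphD ?rmorphM. ring. Qed.
Lemma WH01 : ptrH Pw (inord 0) (inord 1) = Nc * ((a*a+k2)%:C * c0 * u1 - (b*b+k1)%:C * u1 * c0).
Proof. wexp. rewrite /Nc /c0 /c1 ?rmorphD ?rmorphM. ring. Qed.
Lemma WH10 : ptrH Pw (inord 1) (inord 0) = Nc * ((a*a+k2)%:C * c1 * u0 - (b*b+k1)%:C * u0 * c1).
Proof. wexp. rewrite /Nc /c0 /c1 ?rmorphD ?rmorphM. ring. Qed.
Lemma WH11 : ptrH Pw (inord 1) (inord 1) = Nc * ((a*a+k2)%:C * c1 * u1 + (b*b+k1)%:C * u0 * c0).
Proof. wexp. rewrite /Nc /c0 /c1 ?rmorphD ?rmorphM. ring. Qed.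
Lemma Wf : pe Pw 0 0 + pe Pw 0 3 + pe Pw 3 0 + pe Pw 3 3 = (a+b)%:C * (a+b)%:C * Nc * Nc.
Proof. wexp. rewrite /Nc /c0 /c1 ?rmorphD ?rmorphM. ring. Qed.
Lemma Wtr : pe Pw 0 0 + pe Pw 1 1 + pe Pw 2 2 + pe Pw 3 3 = (a*a+b*b+k1+k2)%:C * Nc * Nc.
Proof. wexp. rewrite /Nc /c0 /c1 ?rmorphD ?rmorphM. ring. Qed.
End L4.

Section L5.
Variable R : realType.
Local Notation C := (R[i]).
Variables (n1 n2 n3 s : R) (r : 'rV[R]_3).
Hypothesis h : n1^2 + n2^2 + n3^2 = 1.
Hypothesis hr0 : r 0 (inord 0) = s * n1.
Hypothesis hr1 : r 0 (inord 1) = s * n2.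
Hypothesis hr2 : r 0 (inord 2) = s * n3.
Let u0 : C := (1 + n3) +i* 0.
Let u1 : C := n1 +i* n2.
Let b i j := bloch r (inord i) (inord j).
Let hs : s * (n1^2 + n2^2 + n3^2) = s. Proof. by rewrite h mulr1. Qed.
Let hn : n3 * (n1^2 + n2^2 + n3^2) = n3. Proof. by rewrite h mulr1. Qed.
Let hsn : s * n3 * (n1^2 + n2^2 + n3^2) = s * n3. Proof. by rewrite h mulr1. Qed.

Ltac cfin := rewrite /b ?bloch00 ?bloch01 ?bloch10 ?bloch11 ?hr0 ?hr1 ?hr2 /u0 /u1; csimp; congr (_ +i* _); have h1 := h; have h2 := hs; have h3 := hn; have h4 := hsn; lra.

Lemma E1 : conjc u0 * b 0 0 * u0 + conjc u0 * b 0 1 * u1 + conjc u1 * b 1 0 * u0 + conjc u1 * b 1 1 * u1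
  = ((1 + n3) * (1 + s)) +i* 0.
Proof. cfin. Qed.

Lemma E2 : u0 * b 0 0 * conjc u0 + u0 * b 1 0 * conjc u1 + u1 * b 0 1 * conjc u0 + u1 * b 1 1 * conjc u1
  = ((1 + n3) * (1 + s)) +i* 0.
Proof. cfin. Qed.
Lemma E3 : u1 * b 0 0 * conjc u1 - u1 * b 0 1 * conjc u0 - u0 * b 1 0 * conjc u1 + u0 * b 1 1 * conjc u0
  = ((1 + n3) * (1 - s)) +i* 0.
Proof. cfin. Qed.
Lemma E4 : conjc u1 * b 0 0 * u1 - conjc u1 * b 1 0 * u0 - conjc u0 * b 0 1 * u1 + conjc u0 * b 1 1 * u0
  = ((1 + n3) * (1 - s)) +i* 0.
Proof. cfin. Qed.
Lemma S00 : (1+s)%:C * (u0 * conjc u0) + (1-s)%:C * (conjc u1 * u1) = (4*(1+n3))%:C * b 0 0.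
Proof. cfin. Qed.
Lemma S01 : (1+s)%:C * (u0 * conjc u1) - (1-s)%:C * (conjc u1 * u0) = (4*(1+n3))%:C * b 0 1.
Proof. cfin. Qed.
Lemma S10 : (1+s)%:C * (u1 * conjc u0) - (1-s)%:C * (conjc u0 * u1) = (4*(1+n3))%:C * b 1 0.
Proof. cfin. Qed.
Lemma S11 : (1+s)%:C * (u1 * conjc u1) + (1-s)%:C * (conjc u0 * u0) = (4*(1+n3))%:C * b 1 1.
Proof. cfin. Qed.
Lemma T00 : (1+s)%:C * (conjc u0 * u0) + (1-s)%:C * (u1 * conjc u1) = (4*(1+n3))%:C * b 0 0.
Proof. cfin. Qed.
Lemma T01 : (1+s)%:C * (conjc u0 * u1) - (1-s)%:C * (u1 * conjc u0) = (4*(1+n3))%:C * b 1 0.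
Proof. cfin. Qed.
Lemma T10 : (1+s)%:C * (conjc u1 * u0) - (1-s)%:C * (u0 * conjc u1) = (4*(1+n3))%:C * b 0 1.
Proof. cfin. Qed.
Lemma T11 : (1+s)%:C * (conjc u1 * u1) + (1-s)%:C * (u0 * conjc u0) = (4*(1+n3))%:C * b 1 1.
Proof. cfin. Qed.
End L5.

Section L6.
Variable R : realType.
Local Notation C := (R[i]).
Lemma trCm (P : 'M[C]_4) : \tr (P *m Cm R) = (8:R)%:C * (pe P 0 0 + pe P 1 1 + pe P 2 2 + pe P 3 3)
   - (4:R)%:C * (pe P 0 0 + pe P 0 3 + pe P 3 0 + pe P 3 3).
Proof.
rewrite trE /pe !mxE !sum4 /Cm !mxE !inordK //= !rmorph_nat. ring.
Qed.
End L6.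

Section L7.
Variable R : realType.

Lemma R0 (al be f x y : R) : 0 <= al -> 0 <= be -> al <= x -> be <= y ->
  (forall c d, 0 <= c -> 0 <= d -> c * d * (f - al - be) <= c^+ 2 * al + d^+ 2 * be) ->
  f <= (Num.sqrt x + Num.sqrt y)^+ 2.
Proof.
move=> ha hb hax hby H.
have hx : 0 <= x by apply: le_trans hax.
have hy : 0 <= y by apply: le_trans hby.
have hp2 := sqr_sqrtr hx; have hq2 := sqr_sqrtr hy.
have hp := sqrtr_ge0 x; have hq := sqrtr_ge0 y.
move: hp2 hq2 hp hq; set p := Num.sqrt x; set q := Num.sqrt y => hp2 hq2 hp hq.
have [p0|pn0] := eqVneq p 0.
  have al0 : al = 0 by move: hax; rewrite -hp2 p0 => ?; lra.
  have : f - be <= 0.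
    rewrite leNgt; apply/negP => hfb.
    have hc : 0 <= (be + 1) / (f - be) by apply: divr_ge0; lra.
    have := H _ 1 hc ler01.
    rewrite al0 mulr1 subr0 divfK ?gt_eqF // ?mulr0 ?add0r ?expr1n ?mul1r; lra.
  rewrite p0 add0r hq2; lra.
have [q0|qn0] := eqVneq q 0.
  have be0 : be = 0 by move: hby; rewrite -hq2 q0 => ?; lra.
  have : f - al <= 0.
    rewrite leNgt; apply/negP => hfb.
    have hc : 0 <= (al + 1) / (f - al) by apply: divr_ge0; lra.
    have := H 1 _ ler01 hc.
    rewrite be0 mul1r subr0 divfK ?gt_eqF // ?mulr0 ?addr0 ?expr1n ?mul1r; lra.
  rewrite q0 addr0 hp2; lra.
have pp : 0 < p by rewrite lt_neqAle eq_sym pn0 hp.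
have qp : 0 < q by rewrite lt_neqAle eq_sym qn0 hq.
have H1 := H q p (ltW qp) (ltW pp).
have e1 : 0 <= (p^+ 2 - al) * (q * (p + q)) by apply: mulr_ge0; [lra | apply: mulr_ge0; lra].
have e2 : 0 <= (q^+ 2 - be) * (p * (p + q)) by apply: mulr_ge0; [lra | apply: mulr_ge0; lra].
have pq : 0 < p * q by apply: mulr_gt0.
have : p * q * f <= p * q * (p + q)^+ 2 by nra.
by rewrite ler_pM2l.
Qed.
End L7.

Section L8.
Variable R : realType.
Local Notation C := (R[i]).
Variables (n1 n2 n3 s1 s2 : R) (r1 r2 : 'rV[R]_3).
Hypothesis h : n1^2 + n2^2 + n3^2 = 1.
Hypothesis hn3 : 0 <= n3.
Hypothesis hs1 : -1 <= s1 <= 1.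
Hypothesis hs2 : -1 <= s2 <= 1.
Hypothesis h10 : r1 0 (inord 0) = s1 * n1.
Hypothesis h11 : r1 0 (inord 1) = s1 * n2.
Hypothesis h12 : r1 0 (inord 2) = s1 * n3.
Hypothesis h20 : r2 0 (inord 0) = s2 * n1.
Hypothesis h21 : r2 0 (inord 1) = s2 * n2.
Hypothesis h22 : r2 0 (inord 2) = s2 * n3.
Let u0 : C := (1 + n3) +i* 0.
Let u1 : C := n1 +i* n2.
Let N := 2 * (1 + n3).
Let x0 := (1 + Num.min s1 s2) / 2.
Let y0 := (1 - Num.max s1 s2) / 2.
Let V := 8 - 4 * (Num.sqrt x0 + Num.sqrt y0) ^+ 2.

Lemma NcE : u0 * conjc u0 + u1 * conjc u1 = N%:C.
Proof. have h1 := h; rewrite /u0 /u1 /N; csimp; congr (_ +i* _); lra. Qed.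

Lemma cRD (a b : R) : (a + b)%:C = a%:C + b%:C :> C. Proof. exact: rmorphD. Qed.
Lemma cRB (a b : R) : (a - b)%:C = a%:C - b%:C :> C. Proof. exact: rmorphB. Qed.
Lemma cRM (a b : R) : (a * b)%:C = a%:C * b%:C :> C. Proof. exact: rmorphM. Qed.
Lemma cRN (a : R) : (- a)%:C = - a%:C :> C. Proof. exact: rmorphN. Qed.
Lemma cRV (a : R) : (a^-1)%:C = (a%:C)^-1 :> C. Proof. exact: fmorphV. Qed.
Lemma cR1 : (1 : R)%:C = 1 :> C. Proof. exact: rmorph1. Qed.
Lemma cRn n : (n%:R : R)%:C = n%:R :> C. Proof. exact: rmorph_nat. Qed.

Lemma ReC2 (a b c d : R) : complex.Re ((a +i* b) * (c +i* d)) = a * c - b * d.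
Proof. by simpc. Qed.

Lemma lower (P : 'M[C]_4) (t : R) : coupling (bloch r1) (bloch r2) P ->
  \tr (P *m Csymm2 R) = t%:C -> V <= t.
Proof.
case=> [[hpsd htr] [hD hH]] ht.
have hn3' := hn3; have h' := h.
case/andP: hs1 => hs1a hs1b; case/andP: hs2 => hs2a hs2b.
have pD a k : (a < 2)%N -> (k < 2)%N -> pe P (2*a)%N (2*k)%N + pe P (2*a+1)%N (2*k+1)%N = bloch r2 (inord a) (inord k).
  by move=> ha hk; rewrite -hD ptrDE.
have pH j l : (j < 2)%N -> (l < 2)%N -> pe P j l + pe P (2+j)%N (2+l)%N = bloch r1 (inord l) (inord j).
  by move=> ha hk; rewrite -ptrHE // hH mxE.
have hA : 0 <= Qf P (vA u0 u1) := hpsd _.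
have hB : 0 <= Qf P (vB u0 u1) := hpsd _.
have hG1 : 0 <= Qf P (vG1 u0 u1) := hpsd _.
have hG2 : 0 <= Qf P (vG2 u0 u1) := hpsd _.
have [eA gA] := ge0_real hA; have [eB gB] := ge0_real hB.
have [eG1 gG1] := ge0_real hG1; have [eG2 gG2] := ge0_real hG2.
have F1 := GA P u0 u1.
rewrite (pD 0 0) // (pD 0 1) // (pD 1 0) // (pD 1 1) // NcE (E1 h h20 h21 h22) eA eG1 in F1.
have F2 := GB P u0 u1.
rewrite (pH 0 0) // (pH 0 1) // (pH 1 0) // (pH 1 1) // NcE (E2 h h10 h11 h12) eA eG2 in F2.
have F3 := GC P u0 u1.
rewrite (pD 0 0) // (pD 0 1) // (pD 1 0) // (pD 1 1) // NcE (E3 h h20 h21 h22) eB eG2 in F3.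
have F4 := GD P u0 u1.
rewrite (pH 0 0) // (pH 0 1) // (pH 1 0) // (pH 1 1) // NcE (E4 h h10 h11 h12) eB eG1 in F4.
move: F1 F2 F3 F4.
set A := complex.Re (Qf P (vA u0 u1)); set B := complex.Re (Qf P (vB u0 u1)).
set G1 := complex.Re (Qf P (vG1 u0 u1)); set G2 := complex.Re (Qf P (vG2 u0 u1)).
move=> /(congr1 (@complex.Re R)) F1 /(congr1 (@complex.Re R)) F2 /(congr1 (@complex.Re R)) F3 /(congr1 (@complex.Re R)) F4.
rewrite !ReD (ReRM N) !ReR /= in F1; rewrite !ReD (ReRM N) !ReR /= in F2; rewrite !ReD (ReRM N) !ReR /= in F3; rewrite !ReD (ReRM N) !ReR /= in F4.
rewrite Csymm2E trCm -trE htr in ht.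
set fr := (8 - t) / 4.
have hf : pe P 0 0 + pe P 0 3 + pe P 3 0 + pe P 3 3 = fr%:C.
  have e : (4:R)%:C * (pe P 0 0 + pe P 0 3 + pe P 3 0 + pe P 3 3) = (8:R)%:C - t%:C by rewrite -ht; ring.
  have h4 : (4:R)%:C != 0 by rewrite cRn pnatr_eq0.
  by rewrite /fr cRM cRV cRB -e mulrC mulKf.
have hE c d : 0 <= c * c * A + d * d * B - c * d * (N * N * fr - A - B).
  have := hpsd (c%:C *: vA u0 u1 - d%:C *: vB u0 u1).
  rewrite -[(_ *m _ *m _) 0 0]/(Qf _ _) GE GF NcE cjR hf eA eB => H.
  rewrite -ler0c; apply: (le_trans H); rewrite le_eqVlt; apply/orP; left; apply/eqP.
  by rewrite !(cRB, cRD, cRM).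
have Np : 0 < N by rewrite /N; lra.
have NN : 0 < N * N by apply: mulr_gt0.
have NN0 : N * N != 0 by rewrite gt_eqF.
have N0 : N != 0 by rewrite gt_eqF.
have key : fr <= (Num.sqrt x0 + Num.sqrt y0) ^+ 2.
  apply: (@R0 _ (A / (N * N)) (B / (N * N))).
  - by apply: divr_ge0 => //; apply: ltW.
  - by apply: divr_ge0 => //; apply: ltW.
  - rewrite ler_pdivrMr // /x0 /N; rewrite /N in F1 F2; case: (leP s1 s2) => hs; lra.
  - rewrite ler_pdivrMr // /y0 /N; rewrite /N in F3 F4; case: (leP s1 s2) => hs; lra.
  move=> c d _ _.
  have e1 : c * d * (fr - A / (N * N) - B / (N * N)) = c * d * (N * N * fr - A - B) / (N * N).
    by field; rewrite ?N0.
  have e2 : c ^+ 2 * (A / (N * N)) + d ^+ 2 * (B / (N * N)) = (c * c * A + d * d * B) / (N * N).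
    by field; rewrite ?N0.
  rewrite e1 e2 -(ler_pM2r NN) !divfK //.
  have := hE c d; lra.
rewrite /V; move: key; rewrite /fr; lra.
Qed.
End L8.

Section L9a.
Variable R : realType.
Local Notation C := (R[i]).

Lemma cRX (a : R) n : (a ^+ n)%:C = (a%:C) ^+ n :> C. Proof. exact: rmorphXn. Qed.

Lemma mixC (n3 s : R) (X1 X2 Y1 Y2 b : C) : 1 + n3 != 0 ->
  (1+s)%:C * (X1 * X2) + (1-s)%:C * (Y1 * Y2) = (4*(1+n3))%:C * b ->
  (2*(1+n3))%:C * (((1+s)/(2*((2*(1+n3))*(2*(1+n3)))))%:C * X1 * X2
     + ((1-s)/(2*((2*(1+n3))*(2*(1+n3)))))%:C * Y1 * Y2) = b.
Proof.
move=> hN H.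
have hK : (1 + n3)%:C != 0 :> C.
  apply/eqP => e; move/eqP: hN; apply; exact: (congr1 (@complex.Re R) e).
have h4 : (4 * (1 + n3))%:C != 0 :> C by rewrite cRM mulf_neq0 // cRn pnatr_eq0.
have hb : b = ((1+s)%:C * (X1*X2) + (1-s)%:C * (Y1*Y2)) / (4*(1+n3))%:C.
  by rewrite H [X in X / _]mulrC mulfK.
rewrite hb !(cRM, cRV, cRn).
field.
by apply/eqP => /(congr1 (@complex.Re R)) /=; apply/eqP.
Qed.
Lemma mixCm (n3 s : R) (X1 X2 Y1 Y2 b : C) : 1 + n3 != 0 ->
  (1+s)%:C * (X1 * X2) - (1-s)%:C * (Y1 * Y2) = (4*(1+n3))%:C * b ->
  (2*(1+n3))%:C * (((1+s)/(2*((2*(1+n3))*(2*(1+n3)))))%:C * X1 * X2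
     - ((1-s)/(2*((2*(1+n3))*(2*(1+n3)))))%:C * Y1 * Y2) = b.
Proof.
move=> hN H.
have hK : (1 + n3)%:C != 0 :> C.
  apply/eqP => e; move/eqP: hN; apply; exact: (congr1 (@complex.Re R) e).
have h4 : (4 * (1 + n3))%:C != 0 :> C by rewrite cRM mulf_neq0 // cRn pnatr_eq0.
have hb : b = ((1+s)%:C * (X1*X2) - (1-s)%:C * (Y1*Y2)) / (4*(1+n3))%:C.
  by rewrite H [X in X / _]mulrC mulfK.
rewrite hb !(cRM, cRV, cRn).
field.
by apply/eqP => /(congr1 (@complex.Re R)) /=; apply/eqP.
Qed.
End L9a.

Lemma ord2 (i : 'I_2) : i = inord 0 \/ i = inord 1.
Proof.
case: i => [[|[|]] hi] //; [left | right]; apply: val_inj; by rewrite /= inordK.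
Qed.

Section L9.
Variable R : realType.
Local Notation C := (R[i]).
Variables (n1 n2 n3 s1 s2 : R) (r1 r2 : 'rV[R]_3).
Hypothesis h : n1^2 + n2^2 + n3^2 = 1.
Hypothesis hn3 : 0 <= n3.
Hypothesis hs1 : -1 <= s1 <= 1.
Hypothesis hs2 : -1 <= s2 <= 1.
Hypothesis h10 : r1 0 (inord 0) = s1 * n1.
Hypothesis h11 : r1 0 (inord 1) = s1 * n2.
Hypothesis h12 : r1 0 (inord 2) = s1 * n3.
Hypothesis h20 : r2 0 (inord 0) = s2 * n1.
Hypothesis h21 : r2 0 (inord 1) = s2 * n2.
Hypothesis h22 : r2 0 (inord 2) = s2 * n3.
Let u0 : C := (1 + n3) +i* 0.
Let u1 : C := n1 +i* n2.
Let N := 2 * (1 + n3).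
Let x0 := (1 + Num.min s1 s2) / 2.
Let y0 := (1 - Num.max s1 s2) / 2.
Let V := 8 - 4 * (Num.sqrt x0 + Num.sqrt y0) ^+ 2.
Let a := Num.sqrt x0 / N.
Let b := Num.sqrt y0 / N.
Let k1 := ((1 + s2) / 2 - x0) / (N * N).
Let k2 := ((1 + s1) / 2 - x0) / (N * N).
Let Ps := Pw u0 u1 a b k1 k2.

Lemma witness : coupling (bloch r1) (bloch r2) Ps /\ \tr (Ps *m Csymm2 R) = V%:C.
Proof.
have hn3' := hn3; have h' := h.
case/andP: hs1 => hs1a hs1b; case/andP: hs2 => hs2a hs2b.
have Np : 0 < N by rewrite /N; lra.
have N0 : N != 0 by rewrite gt_eqF.
have n30 : 1 + n3 != 0 by rewrite gt_eqF //; lra.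
have hx0 : 0 <= x0 by rewrite /x0; case: (leP s1 s2) => ?; lra.
have hy0 : 0 <= y0 by rewrite /y0; case: (leP s1 s2) => ?; lra.
have exy : x0 - y0 = (s1 + s2) / 2 by rewrite /x0 /y0; case: (leP s1 s2) => ?; lra.
have ea : a * a = x0 / (N * N).
  by rewrite /a mulf_div -expr2 sqr_sqrtr.
have eb : b * b = y0 / (N * N).
  by rewrite /b mulf_div -expr2 sqr_sqrtr.
have hk1 : 0 <= k1.
  rewrite /k1; apply: divr_ge0; last by apply: mulr_ge0; apply: ltW.
  rewrite /x0; case: (leP s1 s2) => ?; lra.
have hk2 : 0 <= k2.
  rewrite /k2; apply: divr_ge0; last by apply: mulr_ge0; apply: ltW.
  rewrite /x0; case: (leP s1 s2) => ?; lra.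
have eD1 : a * a + k1 = (1 + s2) / (2 * (N * N)) by rewrite ea /k1; field.
have eD2 : b * b + k2 = (1 - s2) / (2 * (N * N)).
  have ey : y0 = x0 - (s1 + s2) / 2 by move: exy; lra.
  by rewrite eb /k2 ey; field.
have eH1 : a * a + k2 = (1 + s1) / (2 * (N * N)) by rewrite ea /k2; field.
have eH2 : b * b + k1 = (1 - s1) / (2 * (N * N)).
  have ey : y0 = x0 - (s1 + s2) / 2 by move: exy; lra.
  by rewrite eb /k1 ey; field.
have NcN : u0 * conjc u0 + u1 * conjc u1 = N%:C by exact: NcE.
have tr1 : \tr Ps = 1.
  rewrite trE Wtr NcN -!cRM -cR1; congr (_%:C).
  have ey : y0 = x0 - (s1 + s2) / 2 by move: exy; lra.
  by rewrite ea eb ey /k1 /k2; field; rewrite ?N0.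
split; first split.
- by split => //; apply: psd_comb.
- split.
  + apply/matrixP => i j; case: (ord2 i) => ->; case: (ord2 j) => ->.
    * by rewrite WD00 NcN eD1 eD2; apply: mixC => //; apply: S00.
    * by rewrite WD01 NcN eD1 eD2; apply: mixCm => //; apply: S01.
    * by rewrite WD10 NcN eD1 eD2; apply: mixCm => //; apply: S10.
    * by rewrite WD11 NcN eD1 eD2; apply: mixC => //; apply: S11.
  + apply/matrixP => i j; rewrite [RHS]mxE; case: (ord2 i) => ->; case: (ord2 j) => ->.
    * by rewrite WH00 NcN eH1 eH2; apply: mixC => //; apply: T00.
    * by rewrite WH01 NcN eH1 eH2; apply: mixCm => //; apply: T01.
    * by rewrite WH10 NcN eH1 eH2; apply: mixCm => //; apply: T10.
    * by rewrite WH11 NcN eH1 eH2; apply: mixC => //; apply: T11.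
rewrite Csymm2E trCm -trE tr1 Wf NcN /V -cR1 -!cRM -cRB; congr (_%:C).
by rewrite /a /b; field; rewrite ?N0.
Qed.
End L9.

Section L10.
Variable R : realType.
Local Notation C := (R[i]).
Variables (n1 n2 n3 s1 s2 : R) (r1 r2 : 'rV[R]_3).
Hypothesis h : n1^2 + n2^2 + n3^2 = 1.
Hypothesis hn3 : 0 <= n3.
Hypothesis hs1 : -1 <= s1 <= 1.
Hypothesis hs2 : -1 <= s2 <= 1.
Hypothesis h10 : r1 0 (inord 0) = s1 * n1.
Hypothesis h11 : r1 0 (inord 1) = s1 * n2.
Hypothesis h12 : r1 0 (inord 2) = s1 * n3.
Hypothesis h20 : r2 0 (inord 0) = s2 * n1.
Hypothesis h21 : r2 0 (inord 1) = s2 * n2.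
Hypothesis h22 : r2 0 (inord 2) = s2 * n3.

Lemma D2val : D2symm (bloch r1) (bloch r2) =
  8 - 4 * (Num.sqrt ((1 + Num.min s1 s2) / 2) + Num.sqrt ((1 - Num.max s1 s2) / 2)) ^+ 2.
Proof.
have [hc ht] := witness h hn3 hs1 hs2 h10 h11 h12 h20 h21 h22.
set V := 8 - _.
pose E := (fun x : R => exists P, coupling (bloch r1) (bloch r2) P /\ \tr (P *m Csymm2 R) = x%:C).
have EV : E V by eexists; split; [exact: hc | exact: ht].
have lb : lbound E V.
  by move=> y [P [hP hy]]; apply: (lower h hn3 hs1 hs2 h10 h11 h12 h20 h21 h22 hP hy).
rewrite /D2symm.
apply/le_anti/andP; split.
- by apply: (ge_inf (E := E)) => //; exists V.
- by apply: (lb_le_inf (E := E)) => //; exists V.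
Qed.
End L10.

Section L11.
Variable R : realType.

Lemma nsq (s : R) : `|s| ^+ 2 = s ^+ 2.
Proof. by rewrite -normrX ger0_norm ?sqr_ge0. Qed.

Lemma Dform (a b : R) : -1 <= a -> a <= b -> b <= 1 ->
  8 - 4 * (Num.sqrt ((1 + a) / 2) + Num.sqrt ((1 - b) / 2)) ^+ 2
  = 4 + 2 * (b - a) - 4 * Num.sqrt ((1 + a) * (1 - b)).
Proof.
move=> ha hab hb.
have p0 : 0 <= (1 + a) / 2 by apply: divr_ge0; lra.
have q0 : 0 <= (1 - b) / 2 by apply: divr_ge0; lra.
rewrite sqrrD !sqr_sqrtr // -sqrtrM //.
have -> : (1 + a) / 2 * ((1 - b) / 2) = ((1 + a) * (1 - b)) * (2^-1) ^+ 2 by rewrite expr2; field.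
have hab0 : 0 <= (1 + a) * (1 - b) by apply: mulr_ge0; lra.
rewrite sqrtrM // sqrtr_sqr ger0_norm ?invr_ge0 //.
by rewrite -[_ *+ 2]mulr_natr; field.
Qed.

Lemma Xnonneg (a b : R) : -1 <= a -> a <= b -> b <= 1 ->
  2 * Num.sqrt ((1 + a) * (1 - b)) <= Num.sqrt ((1 + a) * (1 - a)) + Num.sqrt ((1 + b) * (1 - b)).
Proof.
move=> ha hab hb.
rewrite !sqrtrM; try lra.
have hA := sqrtr_ge0 (1 + a); have hB := sqrtr_ge0 (1 + b).
have hA' := sqrtr_ge0 (1 - a); have hB' := sqrtr_ge0 (1 - b).
have e1 : Num.sqrt (1 + a) <= Num.sqrt (1 + b) by apply: ler_wsqrtr; lra.
have e2 : Num.sqrt (1 - b) <= Num.sqrt (1 - a) by apply: ler_wsqrtr; lra.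
have f1 : 0 <= Num.sqrt (1 + a) * (Num.sqrt (1 - a) - Num.sqrt (1 - b)) by apply: mulr_ge0; lra.
have f2 : 0 <= Num.sqrt (1 - b) * (Num.sqrt (1 + b) - Num.sqrt (1 + a)) by apply: mulr_ge0; lra.
nra.
Qed.

Lemma mq (s1 s2 : R) : -1 <= s1 <= 1 -> -1 <= s2 <= 1 ->
  let m := Num.max `|s1| `|s2| in
  let q := if m == 0 then 0 else s1 * s2 / m in
  (1 + q) * (1 - m) = (1 + Num.min s1 s2) * (1 - Num.max s1 s2).
Proof.
move=> /andP [h1 h1'] /andP [h2 h2'] m q.
have [m0|mn0] := eqVneq m 0.
  have : `|s1| <= m /\ `|s2| <= m by split; rewrite /m ?le_max ?lexx ?orbT.
  rewrite m0 => -[]; rewrite !normr_le0 => /eqP -> /eqP ->.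
  by rewrite /q m0 eqxx minxx maxxx; ring.
have hq : q * m = s1 * s2 by rewrite /q (negbTE mn0) divfK.
rewrite /m in hq mn0 *.
case: (leP `|s1| `|s2|) hq mn0 => hn hq mn0.
- case: (ler0P s2) hn hq mn0 => hs2 hn hq mn0.
  + have hq' : q = - s1.
      apply: (mulIf mn0); rewrite hq; ring.
    rewrite hq'.
    case: (leP s1 s2) => h12.
    * have : s1 = s2 by move: hn; case: (ler0P s1) => ?; lra.
      move=> e; rewrite e; ring.
    * ring.
  + have hq' : q = s1.
      apply: (mulIf mn0); rewrite hq; ring.
    rewrite hq'; case: (leP s1 s2) => h12; first ring.
    by move: hn; case: (ler0P s1) => ?; lra.
- case: (ler0P s1) hn hq mn0 => hs1 hn hq mn0.
  + have hq' : q = - s2.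
      apply: (mulIf mn0); rewrite hq; ring.
    rewrite hq'; case: (leP s1 s2) => h12; first ring.
    by move: hn; case: (ler0P s2) => ?; lra.
  + have hq' : q = s2.
      apply: (mulIf mn0); rewrite hq; ring.
    rewrite hq'; case: (leP s1 s2) => h12; last ring.
    by move: hn; case: (ler0P s2) => ?; lra.
Qed.

Lemma final_real (s1 s2 : R) : -1 <= s1 <= 1 -> -1 <= s2 <= 1 ->
  let D a b := 8 - 4 * (Num.sqrt ((1 + Num.min a b) / 2) + Num.sqrt ((1 - Num.max a b) / 2)) ^+ 2 in
  Num.sqrt (D s1 s2 - (D s1 s1 + D s2 s2) / 2) ^+ 2 =
  2 * (`|s1 - s2| + Num.sqrt (1 - `|s1| ^+ 2) + Num.sqrt (1 - `|s2| ^+ 2)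
       - 2 * Num.sqrt ((1 + Num.min s1 s2) * (1 - Num.max s1 s2))).
Proof.
move=> /andP [h1 h1'] /andP [h2 h2'] D; rewrite /D !minxx !maxxx.
rewrite (Dform h1 (lexx s1) h1') (Dform h2 (lexx s2) h2') !nsq.
have -> : 1 - s1 ^+ 2 = (1 + s1) * (1 - s1) by ring.
have -> : 1 - s2 ^+ 2 = (1 + s2) * (1 - s2) by ring.
case: (leP s1 s2) => h12.
- rewrite (Dform h1 h12 h2') (ler0_norm (_ : s1 - s2 <= 0)); last lra.
  have := Xnonneg h1 h12 h2'.
  set T := Num.sqrt ((1 + s1) * (1 - s2)); set T1 := Num.sqrt ((1 + s1) * (1 - s1)).
  set T2 := Num.sqrt ((1 + s2) * (1 - s2)) => hX.
  by rewrite sqr_sqrtr; lra.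
- have h21 : s2 <= s1 by apply: ltW.
  rewrite (Dform h2 h21 h1') (ger0_norm (_ : 0 <= s1 - s2)); last lra.
  have := Xnonneg h2 h21 h1'.
  set T := Num.sqrt ((1 + s2) * (1 - s1)); set T1 := Num.sqrt ((1 + s1) * (1 - s1)).
  set T2 := Num.sqrt ((1 + s2) * (1 - s2)) => hX.
  by rewrite sqr_sqrtr; lra.
Qed.
End L11.

Section L12.
Variable R : realType.

Lemma dep_ab (r1 r2 : 'rV[R]_3) : ~~ row_free (col_mx r1 r2) ->
  exists a b : R, (a != 0) || (b != 0) /\ a *: r1 + b *: r2 = 0.
Proof.
move=> hf.
set A := col_mx r1 r2.
have hr : (\rank A < 2)%N.
  by move: hf; rewrite /row_free ltn_neqAle rank_leq_row andbT.
have hK : kermx A != 0.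
  by rewrite -mxrank_eq0 mxrank_ker -lt0n subn_gt0.
have [i hi] : exists i, row i (kermx A) != 0.
  apply/existsP; apply: contraR hK; rewrite negb_exists => /forallP hall.
  by apply/eqP/row_matrixP => i; rewrite row0; apply/eqP; move: (hall i); rewrite negbK.
set v := row i (kermx A) in hi *.
have hv : v *m A = 0 by apply/sub_kermxP; exact: row_sub.
exists (lsubmx v 0 0), (rsubmx v 0 0); split.
  apply: contraR hi; rewrite negb_or !negbK => /andP [/eqP ha /eqP hb].
  apply/eqP.
  have -> : v = row_mx (lsubmx v) (rsubmx v) by rewrite hsubmxK.
  rewrite [lsubmx v]mx11_scalar [rsubmx v]mx11_scalar ha hb.
  by rewrite raddf0 row_mx0.
by rewrite -!mul_scalar_mx -!mx11_scalar -mul_row_col hsubmxK.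
Qed.

Lemma ord3 (k : 'I_3) : [\/ k = inord 0, k = inord 1 | k = inord 2].
Proof.
case: k => [[|[|[|]]] hk] //; [apply: Or31 | apply: Or32 | apply: Or33]; apply: val_inj; by rewrite /= inordK.
Qed.

Definition goodd (r1 r2 : 'rV[R]_3) (n1 n2 n3 s1 s2 : R) :=
  [/\ n1^2 + n2^2 + n3^2 = 1, 0 <= n3,
     [/\ r1 0 (inord 0) = s1 * n1, r1 0 (inord 1) = s1 * n2 & r1 0 (inord 2) = s1 * n3] &
     [/\ r2 0 (inord 0) = s2 * n1, r2 0 (inord 1) = s2 * n2 & r2 0 (inord 2) = s2 * n3]].

Lemma ez (x : R) : x ^ 2 = x ^+ 2. Proof. by []. Qed.

Lemma scl (t nu sg x : R) : nu != 0 -> sg * sg = 1 -> t * x = t * nu * sg * (sg * x / nu).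
Proof.
move=> h0 h1; rewrite (_ : t * nu * sg * (sg * x / nu) = t * x * (sg * sg)); first by rewrite h1 mulr1.
by field.
Qed.

Lemma unitize (w r1 r2 : 'rV[R]_3) t1 t2 : w != 0 -> r1 = t1 *: w -> r2 = t2 *: w ->
  exists n1 n2 n3 s1 s2, goodd r1 r2 n1 n2 n3 s1 s2.
Proof.
move=> hw -> ->.
set w0 := w 0 (inord 0); set w1 := w 0 (inord 1); set w2 := w 0 (inord 2).
set d := w0 ^+ 2 + w1 ^+ 2 + w2 ^+ 2.
have dp : 0 < d.
  rewrite lt_neqAle eq_sym; apply/andP; split; last by rewrite /d; apply: addr_ge0; [apply: addr_ge0|]; apply: sqr_ge0.
  apply: contra hw => /eqP d0.
  have e0 : w0 = 0 by apply/eqP; rewrite -sqrf_eq0; apply/eqP; move: d0; rewrite /d; have := sqr_ge0 w0; have := sqr_ge0 w1; have := sqr_ge0 w2; lra.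
  have e1 : w1 = 0 by apply/eqP; rewrite -sqrf_eq0; apply/eqP; move: d0; rewrite /d; have := sqr_ge0 w0; have := sqr_ge0 w1; have := sqr_ge0 w2; lra.
  have e2 : w2 = 0 by apply/eqP; rewrite -sqrf_eq0; apply/eqP; move: d0; rewrite /d; have := sqr_ge0 w0; have := sqr_ge0 w1; have := sqr_ge0 w2; lra.
  apply/eqP/matrixP => i k; rewrite (ord1 i) [RHS]mxE; case: (ord3 k) => ->; [exact e0 | exact e1 | exact e2].
set nu := Num.sqrt d.
have nup : 0 < nu by rewrite /nu sqrtr_gt0.
have nu2 : nu ^+ 2 = d by rewrite /nu sqr_sqrtr // ltW.
have nu0 : nu != 0 by rewrite gt_eqF.
pose sg : R := if 0 <= w2 then 1 else -1.
have sg2 : sg * sg = 1 by rewrite /sg; case: ifP => _; ring.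
exists (sg * w0 / nu), (sg * w1 / nu), (sg * w2 / nu), (t1 * nu * sg), (t2 * nu * sg).
split.
- rewrite !ez.
  have -> : (sg * w0 / nu) ^+ 2 + (sg * w1 / nu) ^+ 2 + (sg * w2 / nu) ^+ 2 = (sg * sg) * d / nu ^+ 2.
    by rewrite /d; field.
  by rewrite sg2 nu2 mul1r divff // gt_eqF.
- apply: divr_ge0; last exact: ltW.
  by rewrite /sg; case: ifP => h; [rewrite mul1r | rewrite mulN1r oppr_ge0; apply: ltW; rewrite ltNge h].
- by split; rewrite mxE; apply: scl.
- by split; rewrite mxE; apply: scl.
Qed.

Lemma decomp (r1 r2 : 'rV[R]_3) : ~~ row_free (col_mx r1 r2) ->
  exists n1 n2 n3 s1 s2, goodd r1 r2 n1 n2 n3 s1 s2.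
Proof.
move=> /dep_ab [a [b [hab he]]].
have [r10|r1n0] := eqVneq r1 0.
  have [r20|r2n0] := eqVneq r2 0.
    exists 0, 0, 1, 0, 0; split => //.
    - rewrite !ez; ring.
    - by split; rewrite r10 mxE mul0r.
    - by split; rewrite r20 mxE mul0r.
  by apply: (@unitize r2 r1 r2 0 1) => //; rewrite ?r10 ?scale0r ?scale1r.
have bn0 : b != 0.
  apply/eqP => b0; move: he; rewrite b0 scale0r addr0 => /eqP.
  rewrite scaler_eq0 (negbTE r1n0) orbF => /eqP a0.
  by move: hab; rewrite a0 b0 eqxx.
apply: (@unitize r1 r1 r2 1 (- (a / b))) => //; first by rewrite scale1r.
move/eqP: he; rewrite addrC addr_eq0 => /eqP e.
have -> : r2 = b^-1 *: (b *: r2) by rewrite scalerA mulVf // scale1r.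
by rewrite e scalerN scalerA mulrC scaleNr.
Qed.
End L12.

Section L13.
Variable R : realType.

Lemma sum3R (F : 'I_3 -> R) : \sum_(i < 3) F i = F (inord 0) + F (inord 1) + F (inord 2).
Proof.
rewrite !big_ord_recr big_ord0 /= GRing.add0r.
by congr (_ + _ + _); congr F; apply: val_inj; rewrite /= inordK.
Qed.

Lemma dotE (u v : 'rV[R]_3) : dot3 u v = u 0 (inord 0) * v 0 (inord 0) + u 0 (inord 1) * v 0 (inord 1) + u 0 (inord 2) * v 0 (inord 2).
Proof. by rewrite /dot3 sum3R. Qed.

End L13.

Local Close Scope complex_scope.

Theorem corollary3p3 (R : realType) (r1 r2 : 'rV[R]_3) :
  norm3 r1 <= 1 -> norm3 r2 <= 1 ->
  ~~ row_free (col_mx r1 r2) ->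
  let m := Num.max (norm3 r1) (norm3 r2) in
  let q := if m == 0 then 0 else dot3 r1 r2 / m in
  dsymm (bloch r1) (bloch r2) ^+ 2 =
  2 * (norm3 (r1 - r2) + Num.sqrt (1 - norm3 r1 ^+ 2)
       + Num.sqrt (1 - norm3 r2 ^+ 2)
       - 2 * Num.sqrt ((1 + q) * (1 - m))).
Proof.
move=> hn1 hn2 hdep m q.
have [n1 [n2 [n3 [s1 [s2 [h hn3 [h10 h11 h12] [h20 h21 h22]]]]]]] := decomp hdep.
have h' := h; rewrite !ez in h'.
have N1 : norm3 r1 = `|s1|.
  rewrite /norm3 dotE h10 h11 h12 -sqrtr_sqr; congr Num.sqrt.
  by rewrite -[s1 ^+ 2]mulr1 -h'; ring.
have N2 : norm3 r2 = `|s2|.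
  rewrite /norm3 dotE h20 h21 h22 -sqrtr_sqr; congr Num.sqrt.
  by rewrite -[s2 ^+ 2]mulr1 -h'; ring.
have N12 : norm3 (r1 - r2) = `|s1 - s2|.
  rewrite /norm3 dotE !mxE h10 h11 h12 h20 h21 h22 -sqrtr_sqr; congr Num.sqrt.
  by rewrite -[(s1 - s2) ^+ 2]mulr1 -h'; ring.
have Dt : dot3 r1 r2 = s1 * s2.
  by rewrite dotE h10 h11 h12 h20 h21 h22 -[s1 * s2]mulr1 -h'; ring.
have hs1 : -1 <= s1 <= 1 by rewrite -ler_norml -N1.
have hs2 : -1 <= s2 <= 1 by rewrite -ler_norml -N2.
rewrite /q /m N1 N2 N12 Dt.
rewrite /dsymm (D2val h hn3 hs1 hs2 h10 h11 h12 h20 h21 h22).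
rewrite (D2val h hn3 hs1 hs1 h10 h11 h12 h10 h11 h12).
rewrite (D2val h hn3 hs2 hs2 h20 h21 h22 h20 h21 h22).
have := final_real hs1 hs2; rewrite /= => ->.
by rewrite (mq hs1 hs2).
Qed.
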